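(* Let $\ell$ be an odd prime, $\zeta_\ell$ a primitive $\ell$-th root of unity, $p\in\mathbb{P}$, and $\mathfrak{p}$ a prime ideal of $\mathbb{Z}[\zeta_\ell]$ lying above $p$. For every positive real number $T$, the cardinality of $\{d\in\mathbb{N}: d<T \text{ and } \mathfrak{p}^2\mid d-\zeta_\ell\}$ is at most $T/p^2+1$.
   Context: $\Phi_\ell(X)$ denotes the $\ell$-th cyclotomic polynomial, and $\mathbb{P}$ denotes the set of primes $p$ that divide $\Phi_\ell(d)$ for some $d\in\mathbb{N}$. *)

(* Defs.v *)
From mathcomp Require Import all_boot all_order all_algebra all_field.
Set Implicit Arguments. Unset Strict Implicit. Unset Printing Implicit Defensive.
Import Order.TTheory GRing.Theory Num.Theory.
Local Open Scope ring_scope.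

Definition Zzeta (z : algC) (x : algC) : Prop :=
  exists a : seq int, x = \sum_(i < size a) (a`_i)%:~R * z ^+ i.

Definition is_ideal (z : algC) (I : algC -> Prop) : Prop :=
  [/\ forall x, I x -> Zzeta z x,
      I 0,
      forall x y, I x -> I y -> I (x + y)
    & forall r x, Zzeta z r -> I x -> I (r * x)].

Definition prime_ideal (z : algC) (I : algC -> Prop) : Prop :=
  [/\ is_ideal z I, ~ I 1
    & forall x y, Zzeta z x -> Zzeta z y -> I (x * y) -> I x \/ I y].

Definition lies_above (I : algC -> Prop) (p : nat) : Prop := I p%:R.

(* Membership in I^2: x is a finite sum of products of two elements of I.
   For ideals of the Dedekind domain Z[z], "I^2 | x" means x \in I^2. *)
Definition in_ideal_sq (I : algC -> Prop) (x : algC) : Prop :=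
  exists s : seq (algC * algC),
    (forall u, u \in s -> I u.1 /\ I u.2) /\ x = \sum_(u <- s) u.1 * u.2.

(* The set P: primes p dividing Phi_l(d) for some natural d. *)
Definition inPP (l p : nat) : Prop :=
  prime p /\ exists d : nat, (p%:Z %| (Cyclotomic l).[d%:Z])%Z.

(* Main.v *)
Require Import Defs.
From mathcomp Require Import all_boot all_order all_algebra all_field.
From mathcomp Require Import ring lra zify.
Import Order.TTheory GRing.Theory Num.Theory.
Local Open Scope ring_scope.

Section Zeta.
Variable z : algC.
Definition ev (f : {poly int}) : algC := (map_poly intr f).[z].
Lemma evD f g : ev (f + g) = ev f + ev g.
Proof. by rewrite /ev rmorphD hornerD. Qed.
Lemma evB f g : ev (f - g) = ev f - ev g.
Proof. by rewrite /ev rmorphB hornerD hornerN. Qed.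
Lemma evM f g : ev (f * g) = ev f * ev g.
Proof. by rewrite /ev rmorphM hornerM. Qed.
Lemma evC c : ev c%:P = c%:~R.
Proof. by rewrite /ev map_polyC hornerC. Qed.
Lemma evX : ev 'X = z.
Proof. by rewrite /ev map_polyX hornerX. Qed.
Lemma evXn n : ev ('X^n) = z ^+ n.
Proof. by rewrite /ev map_polyXn hornerXn. Qed.

Lemma ZzetaE x : Zzeta z x <-> exists f, x = ev f.
Proof.
split.
  case=> a ->; exists (Poly a); rewrite /ev (@horner_coef_wide _ (size a)).
    by apply: eq_bigr => i _; rewrite coef_map /= coef_Poly.
  by rewrite size_map_inj_poly ?size_Poly //; exact: intr_inj.
case=> f ->; exists (polyseq f); rewrite /ev (@horner_coef_wide _ (size f)).
  by apply: eq_bigr => i _; rewrite coef_map.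
by rewrite size_map_inj_poly //; exact: intr_inj.
Qed.
End Zeta.

Lemma factor_int (f : {poly int}) (c : int) :
  exists g, f = f.[c]%:P + ('X - c%:P) * g.
Proof.
have : root (f - f.[c]%:P) c by rewrite rootE hornerD hornerN hornerC subrr.
case/factor_theorem => g Hg; exists g.
by rewrite mulrC -Hg addrC subrK.
Qed.

Section Ideal.
Variables (z : algC) (P : algC -> Prop).
Hypothesis HI : is_ideal z P.

Lemma P_Z x : P x -> Zzeta z x.
Proof. by case: HI => H _ _ _; apply: H. Qed.
Lemma P0 : P 0. Proof. by case: HI. Qed.
Lemma PD x y : P x -> P y -> P (x + y). Proof. by case: HI => _ _ H _; apply: H. Qed.
Lemma PevM f x : P x -> P (ev z f * x).
Proof. by case: HI => _ _ _ H; apply: H; apply/ZzetaE; exists f. Qed.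
Lemma PZM r x : Zzeta z r -> P x -> P (r * x).
Proof. by case: HI => _ _ _ H; apply: H. Qed.
Lemma PMZ r x : Zzeta z r -> P x -> P (x * r).
Proof. by move=> ? ?; rewrite mulrC; apply: PZM. Qed.
Lemma PintM (n : int) x : P x -> P (n%:~R * x).
Proof. by move=> Px; rewrite -(evC z n); apply: PevM. Qed.
Lemma PN x : P x -> P (- x).
Proof. by move=> Px; have := PintM (-1) _ Px; by rewrite mulrNz mulN1r. Qed.
Lemma PB x y : P x -> P y -> P (x - y).
Proof. by move=> Px Py; apply: PD => //; apply: PN. Qed.

Lemma P_sq x : in_ideal_sq P x -> P x.
Proof.
case=> s [Hs ->]; elim: s Hs => [|u s IH] Hs; first by rewrite big_nil; apply: P0.
rewrite big_cons; apply: PD; last by apply: IH => v vs; apply: Hs; rewrite inE vs orbT.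
have [H1 H2] := Hs u (mem_head _ _).
by apply: PMZ => //; apply: P_Z.
Qed.

Variable p : nat.
Hypotheses (pr_p : prime p) (Pp : P p%:R) (nP1 : ~ P 1).

Lemma int_in_P (n : int) : P n%:~R -> (p%:Z %| n)%Z.
Proof.
move=> Pn; apply/negPn/negP => nd.
have cop : coprimez p n by rewrite coprimezE absz_nat prime_coprime // -dvdzE.
have [u [v Huv]] := Bezoutz p n.
move: cop; rewrite /coprimez => /eqP cop; rewrite cop in Huv.
apply: nP1.
have -> : (1 : algC) = (u * p + v * n)%:~R by rewrite Huv.
by rewrite intrD !intrM; apply: PD; apply: PintM.
Qed.

Lemma P_at (c : int) f : P (z - c%:~R) -> P (ev z f) -> (p%:Z %| f.[c])%Z.
Proof.
move=> Pc Pf; apply: int_in_P.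
have [g Hg] := factor_int f c.
have : ev z f = (f.[c])%:~R + (z - c%:~R) * ev z g.
  by rewrite {1}Hg evD evC evM evB evX evC.
move=> E; have -> : (f.[c])%:~R = ev z f - (z - c%:~R) * ev z g by rewrite E addrK.
by apply: PB => //; apply: PMZ => //; apply/ZzetaE; exists g.
Qed.
End Ideal.

Lemma ev_Phi (l : nat) (z : algC) : l.-primitive_root z -> ev z 'Phi_l = 0.
Proof.
move=> prim; rewrite /ev (Cintr_Cyclotomic prim); apply/rootP.
by rewrite root_cyclotomic.
Qed.

Lemma ev0_Phi (l : nat) (z : algC) (f : {poly int}) :
  l.-primitive_root z -> ev z f = 0 -> exists q, f = q * 'Phi_l.
Proof.
move=> prim f0.
have monP := Cyclotomic_monic l.
have Df := Pdiv.IdomainMonic.divp_eq monP f.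
exists (f %/ 'Phi_l).
suff r0 : f %% 'Phi_l = 0 by rewrite {1}Df r0 addr0.
have er : ev z (f %% 'Phi_l) = 0.
  by move: f0; rewrite {1}Df evD evM ev_Phi // mulr0 add0r.
apply/eqP; apply/negPn/negP => rn0.
have ltr : (size (f %% 'Phi_l)%R < size 'Phi_l)%N by rewrite ltn_modp monic_neq0.
have [pm [Dpm _] dvp] := minCpolyP z.
pose rQ : {poly rat} := map_poly intr (f %% 'Phi_l).
have rQE : map_poly ratr rQ = map_poly (intr : int -> algC) (f %% 'Phi_l).
  rewrite -map_poly_comp; apply: eq_map_poly => n /=; exact: rmorph_int.
have : root (map_poly ratr rQ) z by rewrite rQE; apply/rootP.
rewrite dvp => /dvdp_leq.
have rQn0 : rQ != 0.
  by rewrite -size_poly_eq0 /rQ size_map_inj_poly ?size_poly_eq0 //; exact: intr_inj.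
move/(_ rQn0).
have : size pm = size 'Phi_l.
  rewrite -(size_map_poly (@ratr algC) pm) -Dpm (minCpoly_cyclotomic prim).
  rewrite -(Cintr_Cyclotomic prim).
  by rewrite size_map_inj_poly //; exact: intr_inj.
move=> ->; rewrite /rQ size_map_inj_poly //; last exact: intr_inj.
by rewrite leqNgt ltr.
Qed.

Lemma count_res (q r M : nat) (s : seq nat) : (0 < q)%N -> uniq s ->
  (forall d, d \in s -> d %% q = r /\ d <= M)%N -> (size s <= M %/ q + 1)%N.
Proof.
move=> q0 us H.
have inj : {in s &, injective (fun d => d %/ q)%N}.
  move=> x y xs ys E; rewrite (divn_eq x q) (divn_eq y q) E.
  by have [-> _] := H x xs; have [-> _] := H y ys.
have := @uniq_leq_size _ (map (fun d => d %/ q)%N s) (iota 0 (M %/ q).+1).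
rewrite size_map size_iota addn1; apply; first by rewrite map_inj_in_uniq.
move=> y /mapP [x xs ->]; rewrite mem_iota /= add0n ltnS leq_div2r //.
by have [_ ->] := H x xs.
Qed.

Lemma final_bound (R : realFieldType) (T : R) (q : nat) (s : seq nat) r :
  (0 < q)%N -> 0 < T -> uniq s ->
  (forall d, d \in s -> (d %% q = r)%N /\ d%:R < T) ->
  (size s)%:R <= T / q%:R + 1.
Proof.
move=> q0 T0 us H.
pose M := (\max_(d <- s) d)%N.
have HM : forall d, d \in s -> (d <= M)%N.
  by move=> d ds; apply: (@leq_bigmax_seq _ s xpredT id d ds).
have MT : (M%:R : R) < T.
  rewrite /M big_seq; apply: (big_ind (fun x : nat => (x%:R : R) < T)) => //.
    move=> x y hx hy; case: (leqP x y) => h.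
      by [].
    by [].
  by move=> d ds; have [_ ->] := H d ds.
have := @count_res q r M s q0 us (fun d ds => conj (proj1 (H d ds)) (HM d ds)).
rewrite -(ler_nat R) natrD => h; apply: (le_trans h); rewrite lerD2r.
rewrite ler_pdivlMr ?ltr0n // -natrM; apply: le_trans (ltW MT).
by rewrite ler_nat leq_trunc_div.
Qed.

Lemma PoszX' (d k : nat) : ((d ^ k)%N : int) = (d : int) ^+ k.
Proof. by elim: k => [|k IH]; rewrite ?expr0 // expnS exprS PoszM IH. Qed.

Lemma split_case (l p : nat) (z : algC) (P : algC -> Prop) (d0 : nat) :
  l.-primitive_root z -> prime l -> prime p -> p != l ->
  is_ideal z P -> P p%:R -> ~ P 1 -> P (z - d0%:R) ->
  exists a : int, forall d : nat, in_ideal_sq P (d%:R - z) ->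
    (p%:Z ^+ 2 %| d%:Z - a)%Z.
Proof.
move=> prim prl prp pl HI Pp nP1 Pd0.
pose D0 : int := d0%:Z.
have S1 : forall f, P (ev z f) -> (p%:Z %| f.[D0])%Z.
  by move=> f; apply: (@P_at z P HI p prp Pp nP1 D0 f Pd0).
have S2 : (p%:Z %| ('Phi_l).[D0])%Z by apply: S1; rewrite (@ev_Phi l z prim); exact: (@P0 z P HI).
have [g Hg] := factor_int 'Phi_l D0.
pose c := g.[D0].
have S4 : ~~ (p%:Z %| c)%Z.
  apply/negP => pc.
  have [q Hq] : exists q, 'X^l - 1 = q * 'Phi_l.
    apply: (@ev0_Phi l z _ prim).
    by rewrite evB evXn (prim_expr_order prim) /ev rmorph1 hornerC subrr.
  have Hd := congr1 (fun f => (deriv f).[D0]) Hq; move: Hd => /=.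
  rewrite derivB derivC subr0 derivXn derivM {2}Hg derivD derivC add0r derivM derivXsubC.
  rewrite !hornerE subrr mul0r addr0 -/c => Hd.
  have Hl : (p%:Z %| ('X^(l.-1) *+ l).[D0])%Z.
    by rewrite Hd; apply: rpredD; [apply: dvdz_mull | apply: dvdz_mull].
  have Hl2 : (p%:Z %| D0 ^+ l - 1)%Z.
    have := congr1 (fun f => f.[D0]) Hq => /=; rewrite !hornerE => ->.
    exact: dvdz_mull.
  move: Hl Hl2; rewrite hornerMn hornerXn /D0 -(PoszX' d0 l.-1) -(PoszX' d0 l) -mulr_natr natz -PoszM.
  rewrite dvdzE /= (Euclid_dvdM _ _ prp) (dvdn_prime2 prp prl) (negbTE pl) orbF => pd.
  have pd0 : (p %| d0)%N by move: pd; rewrite Euclid_dvdX // => /andP[].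
  have pdl : (p%:Z %| ((d0 ^ l)%N : int))%Z.
    by rewrite dvdzE /=; apply: dvdn_exp => //; apply: prime_gt0.
  move=> H2; have := rpredB pdl H2; rewrite opprB addrC subrK dvdz1 /=.
  by move/eqP => p1; move: prp; rewrite p1.
have cop : coprimez p c by rewrite coprimezE absz_nat prime_coprime // -dvdzE.
have [u [v Huv]] := Bezoutz p c.
move: cop; rewrite /coprimez => /eqP cop; rewrite cop in Huv.
have [m Hm] := dvdzP S2.
pose t := - (m * v).
pose a := D0 + p%:Z * t.
have [h Hh] := factor_int g D0.
have Ha : (p%:Z ^+ 2 %| ('Phi_l).[a])%Z.
  have E1 : ('Phi_l).[a] = ('Phi_l).[D0] + (a - D0) * g.[a].
    by rewrite {1}Hg !hornerE.
  have E2 : g.[a] = c + (a - D0) * h.[a] by rewrite {1}Hh !hornerE.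
  rewrite E1 E2 Hm; move: (h.[a]) => H.
  apply/dvdzP; exists (m * u + t ^+ 2 * H).
  transitivity ((m * u + t ^+ 2 * H) * p%:Z ^+ 2 + m * p * (1 - (u * p + v * c))).
    by rewrite /a /t; ring.
  by rewrite Huv subrr mulr0 addr0.
have S6 : forall f, P (ev z f) -> (p%:Z %| f.[a])%Z.
  move=> f Pf; have [k Hk] := factor_int f D0.
  rewrite Hk !hornerE; apply: rpredD; first exact: S1.
  by apply: dvdz_mulr; rewrite /a addrC addKr; apply: dvdz_mulr.
have S7 : forall x, in_ideal_sq P x ->
    exists f, x = ev z f /\ (p%:Z ^+ 2 %| f.[a])%Z.
  move=> x [s [Hs ->]]; elim: s Hs => [|w s IH] Hs.
    by exists 0; rewrite big_nil /ev rmorph0 horner0 horner0 dvdz0.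
  rewrite big_cons.
  have [H1 H2] := Hs w (mem_head _ _).
  have [f1 E1] := (ZzetaE z w.1).1 (@P_Z z P HI _ H1).
  have [f2 E2] := (ZzetaE z w.2).1 (@P_Z z P HI _ H2).
  have [f [Ef Hf]] : exists f, \sum_(u0 <- s) u0.1 * u0.2 = ev z f /\ (p%:Z ^+ 2 %| f.[a])%Z.
    by apply: IH => y ys; apply: Hs; rewrite inE ys orbT.
  exists (f1 * f2 + f); split; first by rewrite evD evM -E1 -E2 -Ef.
  rewrite hornerD hornerM; apply: rpredD => //.
  by rewrite expr2; apply: dvdz_mul; apply: S6; [rewrite -E1 | rewrite -E2].
exists a => d Hd.
have [f [Ef Hf]] := S7 _ Hd.
have [q Hq] : exists q, f - ((d%:Z)%:P - 'X) = q * 'Phi_l.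
  by apply: (@ev0_Phi l z _ prim); rewrite evB -Ef evB evC evX subrr.
have := congr1 (fun g => g.[a]) Hq => /=; rewrite !hornerE => E.
have H3 : (p%:Z ^+ 2 %| f.[a] - (d%:Z - a))%Z by rewrite E; apply: dvdz_mull.
by have := rpredB Hf H3; rewrite opprB addrC subrK.
Qed.

Lemma ev0 (z : algC) : ev z 0 = 0.
Proof. by rewrite /ev map_poly0 horner0. Qed.
Lemma ev1 (z : algC) : ev z 1 = 1.
Proof. by rewrite /ev rmorph1 hornerC. Qed.

Lemma evN (z : algC) f : ev z (- f) = - ev z f.
Proof. by rewrite /ev rmorphN hornerN. Qed.

Lemma pow_exp (z : algC) (i : nat) :
  exists w, z ^+ i = 1 + i%:R * (z - 1) + (z - 1) ^+ 2 * ev z w.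
Proof.
elim: i => [|i [w IH]]; first by exists 0; rewrite ev0 expr0 mul0r mulr0 !addr0.
exists (i%:Z%:P + w * 'X); rewrite exprS IH evD evM evC evX.
rewrite -[(i:int)%:~R]/(i%:R : algC) -natr1; ring.
Qed.

Lemma sum_pow (z : algC) (n : nat) :
  exists W, \sum_(i < n) z ^+ i = n%:R + ('C(n, 2))%:R * (z - 1) + (z - 1) ^+ 2 * ev z W.
Proof.
elim: n => [|n [W IH]]; first by exists 0; rewrite big_ord0 ev0 !mul0r mulr0 !addr0.
have [w Hw] := pow_exp z n.
exists (W + w); rewrite big_ord_recr /= IH Hw evD binS bin1 !natrD; ring.
Qed.

Lemma ram_case (l : nat) (z : algC) (P : algC -> Prop) (d0 : nat) :
  l.-primitive_root z -> prime l -> odd l ->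
  is_ideal z P -> P l%:R -> ~ P 1 -> P (z - d0%:R) -> ~ in_ideal_sq P (d0%:R - z).
Proof.
move=> prim prl oddl HI Pl nP1 Pd0 Hsq.
pose D0 : int := d0%:Z.
have R1 : (l%:Z %| D0 ^+ l - 1)%Z.
  have := @P_at z P HI l prl Pl nP1 D0 ('X^l - 1) Pd0.
  rewrite !hornerE; apply.
  rewrite evB evXn (prim_expr_order prim) /ev rmorph1 hornerC subrr.
  exact: (@P0 z P HI).
have R2 : (l%:Z %| D0 - 1)%Z.
  have F : (l%:Z %| D0 ^+ l - D0)%Z.
    rewrite -eqz_mod_dvd /D0 -PoszX'; apply/eqP; rewrite !modz_nat.
    by rewrite fermat_little.
  have -> : D0 - 1 = (D0 ^+ l - 1) - (D0 ^+ l - D0) by ring.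
  exact: rpredB R1 F.
have [k Hk] := dvdzP R2.
pose e := z - 1.
have Pe : P e.
  have -> : e = (z - d0%:R) + (k%:~R * l%:R).
    have -> : k%:~R * (l%:R : algC) = (k * l%:Z)%:~R by rewrite intrM.
    by rewrite -Hk intrB /e /D0 /=; ring.
  by apply: (@PD z P HI) => //; apply: (@PintM z P HI).
have e0 : e != 0.
  rewrite /e subr_eq0; apply/negP => /eqP z1.
  have := prim_order_dvd prim 1; rewrite expr1 z1 eqxx dvdn1 => /eqP l1.
  by move: prl; rewrite l1.
have R6 : \sum_(i < l) z ^+ i = 0.
  have := subrX1 z l; rewrite (prim_expr_order prim) subrr => /esym /eqP.
  by rewrite mulf_eq0 (negbTE e0) => /eqP.
have [W HW] := sum_pow z l.
pose cc := l.-1./2%N.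
have Hl : (l%:R : algC) = e ^+ 2 * (- ev z W * (1 - cc%:R * e) + l%:R * cc%:R ^+ 2).
  have H0 : (l%:R : algC) + (l * cc)%:R * e + e ^+ 2 * ev z W = 0.
    by rewrite -R6 HW bin2odd.
  have H1 : (l%:R : algC) * (1 + cc%:R * e) = - (e ^+ 2 * ev z W).
    by apply/eqP; rewrite -subr_eq0 opprK -H0 natrM; apply/eqP; ring.
  transitivity ((l%:R : algC) * (1 + cc%:R * e) * (1 - cc%:R * e) + l%:R * cc%:R ^+ 2 * e ^+ 2).
    by ring.
  by rewrite H1; ring.
pose V : {poly int} := - W * (1 - cc%:Z%:P * ('X - 1)) + (l * cc ^ 2)%N%:Z%:P.
have HV : (l%:R : algC) = e ^+ 2 * ev z V.
  rewrite Hl /V evD evM evN evB evM evC evB evX evC /e.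
  rewrite ev1 !evC -!pmulrn natrM natrX; ring.
have R10 : forall x, P x -> exists y, x = e * ev z y.
  move=> x Px; have [f Hf] := (ZzetaE z x).1 (@P_Z z P HI _ Px).
  have Pe' : P (z - (1:int)%:~R) by [].
  have := @P_at z P HI l prl Pl nP1 1 f Pe'; rewrite -Hf => /(_ Px) /dvdzP [j Hj].
  have [g Hg] := factor_int f 1.
  exists (j%:P * ('X - 1) * V + g).
  rewrite Hf {1}Hg evD evM evC evB evX Hj evD !evM evB evX evC intrM.
  rewrite evC -!pmulrn HV /e; ring.
have R11 : forall x, in_ideal_sq P x -> exists y, P y /\ x = e * y.
  move=> x [s [Hs ->]]; elim: s Hs => [|w s IH] Hs.
    by exists 0; rewrite big_nil mulr0; split => //; exact: (@P0 z P HI).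
  rewrite big_cons.
  have [H1 H2] := Hs w (mem_head _ _).
  have [y1 E1] := R10 _ H1.
  have [y [Py Ey]] : exists y, P y /\ \sum_(u0 <- s) u0.1 * u0.2 = e * y.
    by apply: IH => y ys; apply: Hs; rewrite inE ys orbT.
  exists (ev z y1 * w.2 + y); split.
    by apply: (@PD z P HI) => //; apply: (@PevM z P HI).
  by rewrite E1 Ey; ring.
have [y [Py Ey]] := R11 _ Hsq.
have Hd0 : (d0%:R : algC) = 1 + k%:~R * l%:R.
  have -> : k%:~R * (l%:R : algC) = (k * l%:Z)%:~R by rewrite intrM.
  by rewrite -Hk intrB /D0 /=; ring.
have E : e * (k%:~R * e * ev z V - 1 - y) = 0.
  rewrite mulrBr mulrBr -Ey Hd0 HV /e; ring.
move/eqP: E; rewrite mulf_eq0 (negbTE e0) /= subr_eq0 => /eqP E.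
apply: nP1.
have -> : (1 : algC) = k%:~R * e * ev z V - y by rewrite -E; ring.
have -> : k%:~R * e * ev z V = ev z (k%:P * V) * e by rewrite evM evC; ring.
by apply: (@PB z P HI) => //; apply: (@PevM z P HI).
Qed.

Theorem lemma2 (l : nat) (z : algC) (p : nat) (P : algC -> Prop)
    (R : realFieldType) (T : R) :
  prime l -> odd l -> l.-primitive_root z ->
  inPP l p -> prime_ideal z P -> lies_above P p ->
  0 < T ->
  forall s : seq nat, uniq s ->
    (forall d, d \in s -> (d%:R < T) /\ in_ideal_sq P (d%:R - z)) ->
    (size s)%:R <= T / (p%:R ^+ 2) + 1.
Proof.
move=> prl oddl prim [prp _] PI Pp T0 s us Hs.
case: PI => HI nP1 _.
case: s us Hs => [|d0 s'] us Hs.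
  have -> : (size (@nil nat))%:R = 0 :> R by []. apply: addr_ge0 => //. apply: divr_ge0; [exact: ltW | exact: exprn_ge0].
have [_ Hsq0] := Hs d0 (mem_head _ _).
have Pd0 : P (z - d0%:R).
  by have := @PN z P HI _ (@P_sq z P HI _ Hsq0); rewrite opprB.
case: (eqVneq p l) => [pl | pl].
  by exfalso; apply: (@ram_case l z P d0 prim prl oddl HI _ nP1 Pd0 Hsq0); rewrite -pl.
have [a Ha] := @split_case l p z P d0 prim prl prp pl HI Pp nP1 Pd0.
rewrite -natrX.
apply: (@final_bound R T (p ^ 2) (d0 :: s') (d0 %% p ^ 2)%N) => //.
  by rewrite expn_gt0 prime_gt0.
move=> d ds; have [dT dsq] := Hs d ds; split => //.
have H1 := Ha d dsq; have H2 := Ha d0 Hsq0.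
have : (p%:Z ^+ 2 %| d%:Z - d0%:Z)%Z.
  have -> : d%:Z - d0%:Z = (d%:Z - a) - (d0%:Z - a) by ring.
  exact: rpredB.
rewrite -eqz_mod_dvd -PoszX' !modz_nat => /eqP E.
by case: E.
Qed.
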